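(* Let $H$ be a hexagonal system with a perfect matching. Suppose $\mathcal{D}=\{D_1,\ldots,D_k\}$ is a set of elementary edge cuts of $H$ such that every nice cycle of $H$ has at least one edge in common with some $D_i\in\mathcal{D}$. Then $D=\bigcup_{i=1}^{k}D_i$ is a complete forcing set of $H$.
   Context: A hexagonal system (HS) is a finite 2-connected plane graph in which every interior face is a regular hexagon of the hexagonal lattice; its vertices are properly colored black and white. A cycle $C$ of a graph $G$ with a perfect matching is nice if $G-V(C)$ has a perfect matching. For a partition $\{V_1,V_2\}$ of $V(H)$, the set $D$ of edges with one end in $V_1$ and the other in $V_2$ is an edge cut; $D$ is an elementary edge cut (e-cut) if $H-D$ has exactly two components and every edge of $D$ joins a black vertex of one of these components to a white vertex of the other. For a perfect matching $M$ of $G$, a forcing set of $M$ is a subset of $M$ contained in no other perfect matching of $G$. A complete forcing set of $G$ is a set $S\subseteq E(G)$ such that for every perfect matching $M$ of $G$, $S\cap M$ is a forcing set of $M$. *)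

(* Defs.v *)
From HB Require Import structures.
From mathcomp Require Import all_boot.
Set Implicit Arguments. Unset Strict Implicit. Unset Printing Implicit Defensive.

(* The hexagonal (honeycomb) lattice in "brick-wall" coordinates, restricted
   to the box [0,N) x [0,N):  vertices (x,y); horizontal edges (x,y)-(x+1,y);
   vertical edges (x,y)-(x,y+1) exactly when x+y is even.  A vertex is black
   iff x+y is even (proper 2-colouring). The hexagons (faces) of the lattice
   are the 3x2 "bricks" with lower-left corner (a,y), a+y even. *)
Section HexLattice.
Variable N : nat.

Definition vtx := ('I_N * 'I_N)%type.
Definition xc (v : vtx) : nat := v.1.
Definition yc (v : vtx) : nat := v.2.
Definition black (v : vtx) : bool := ~~ odd (xc v + yc v).

Definition lat_adj (u v : vtx) : bool :=
  ((yc u == yc v) && (((xc u).+1 == xc v) || ((xc v).+1 == xc u)))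
  || ((xc u == xc v) &&
      ((((yc u).+1 == yc v) && black u) || (((yc v).+1 == yc u) && black v))).

Definition lat_edge (e : {set vtx}) : bool :=
  [exists u, exists v, (e == [set u; v]) && lat_adj u v].

Definition is_hex (h : vtx) : bool :=
  black h && (xc h + 2 < N) && (yc h + 1 < N).
Definition hexv (h v : vtx) : bool :=
  (yc h <= yc v <= yc h + 1) && (xc h <= xc v <= xc h + 2).
Definition hex_edge (h : vtx) (e : {set vtx}) : bool :=
  lat_edge e && (e \subset [set v | hexv h v]).

Definition lat_cycle (c : seq vtx) : bool :=
  uniq c && (2 < size c) && cycle lat_adj c.
Definition cycle_edges (c : seq vtx) : {set {set vtx}} :=
  [set [set x; next c x] | x in c].

(* Vertical edge e is crossed by the horizontal ray going right from the
   centre of the hexagon with corner h. *)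
Definition crosses (h : vtx) (e : {set vtx}) : bool :=
  [exists v in e, exists w in e,
    (xc v == xc w) && (yc v == yc h) && (yc w == (yc h).+1) && (xc h + 2 <= xc v)].
(* Hexagon h lies in the interior of the cycle c (ray-parity rule). *)
Definition inside (c : seq vtx) (h : vtx) : bool :=
  is_hex h && odd #|[set e in cycle_edges c | crosses h e]|.

(* The hexagonal system bounded by the lattice cycle c: all vertices and edges
   of the lattice hexagons in the interior of c. *)
Definition HS_V (c : seq vtx) : {set vtx} :=
  [set v | [exists h, inside c h && hexv h v]].
Definition HS_E (c : seq vtx) : {set {set vtx}} :=
  [set e | [exists h, inside c h && hex_edge h e]].

(* Generic notions for a graph with vertex set W and edge set E
   (edges are 2-element vertex sets). *)
Definition perfect_matching (W : {set vtx}) (E M : {set {set vtx}}) : bool :=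
  (M \subset E) && [forall e in M, e \subset W]
  && [forall v in W, #|[set e in M | v \in e]| == 1].

Definition graph_cycle (E : {set {set vtx}}) (c : seq vtx) : bool :=
  uniq c && (2 < size c) && all (fun x => [set x; next c x] \in E) c.

Definition nice_cycle (W : {set vtx}) (E : {set {set vtx}}) (c : seq vtx) : Prop :=
  graph_cycle E c /\
  exists M, perfect_matching (W :\: [set x in c]) [set e in E | e \subset W :\: [set x in c]] M.

Definition gconn (E : {set {set vtx}}) : rel vtx :=
  connect (fun x y => [set x; y] \in E).

Definition two_components (W : {set vtx}) (E : {set {set vtx}}) : Prop :=
  exists a b, [/\ a \in W, b \in W, ~~ gconn E a b &
                forall v, v \in W -> gconn E a v || gconn E b v].

Definition cut_edges (E : {set {set vtx}}) (V1 V2 : {set vtx}) : {set {set vtx}} :=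
  [set e in E | [exists u in V1, exists v in V2, e == [set u; v]]].

Definition ecut (W : {set vtx}) (E : {set {set vtx}}) (D : {set {set vtx}}) : Prop :=
  exists V1 V2 : {set vtx},
    [/\ V1 :&: V2 = set0, V1 :|: V2 = W, V1 != set0 & V2 != set0] /\
    D = cut_edges E V1 V2 /\
    two_components W (E :\: D) /\
    ((forall e, e \in D -> forall v, v \in e -> (v \in V1) = black v) \/
     (forall e, e \in D -> forall v, v \in e -> (v \in V2) = black v)).

Definition complete_forcing (W : {set vtx}) (E S : {set {set vtx}}) : Prop :=
  forall M M', perfect_matching W E M -> perfect_matching W E M' ->
    S :&: M \subset M' -> M' = M.

End HexLattice.

(* Main.v *)
Require Import Defs.
From mathcomp Require Import all_boot.
Set Implicit Arguments. Unset Strict Implicit. Unset Printing Implicit Defensive.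

Section Aux.
Variable N : nat.
Implicit Types (u v w a b x y : vtx N) (e : {set vtx N}).

Lemma odd_key p q : p.+1 = q -> ~~ odd p != ~~ odd q.
Proof. by move<-; rewrite /=; case: odd. Qed.

Lemma lat_adj_col u v : lat_adj u v -> black u != black v.
Proof.
rewrite /lat_adj /black /xc /yc.
case/orP=> /andP[/eqP H].
  case/orP=> /eqP H2; [apply: odd_key; rewrite -H2 H addSn //|
     rewrite eq_sym; apply: odd_key; rewrite -H2 H addSn //].
case/orP=> /andP[/eqP H2 _]; [apply: odd_key; rewrite -H2 H addnS //|
     rewrite eq_sym; apply: odd_key; rewrite -H2 H addnS //].
Qed.

Lemma set2_col x y a b : [set x; y] = [set a; b] -> black a != black b ->
  black y = ~~ black x.
Proof.
move=> E Hab.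
have hx : x \in [set a; b] by rewrite -E set21.
have hy : y \in [set a; b] by rewrite -E set22.
have ha : a \in [set x; y] by rewrite E set21.
have hb : b \in [set x; y] by rewrite E set22.
move: hx hy ha hb Hab; rewrite !inE.
do 2 case/orP=> /eqP ->; rewrite ?eqxx ?orbb => ha hb;
  try (move/eqP: ha => ha); try (move/eqP: hb => hb); subst => //.
  by rewrite eqxx.
  by case: (black a) (black b) => [] [].
  by case: (black a) (black b) => [] [].
  by rewrite eqxx.
Qed.

Lemma lat_edge_col e : lat_edge e -> exists a b, e = [set a; b] /\ black a != black b.
Proof.
case/existsP=> a /existsP[b /andP[/eqP -> H]]; exists a, b; split=> //.
exact: lat_adj_col.
Qed.
End Aux.

Section PM.
Variable N : nat.
Implicit Types (u v w a b x y : vtx N) (e : {set vtx N}).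
Variables (W : {set vtx N}) (E M : {set {set vtx N}}).
Hypothesis HE : forall e, e \in E -> lat_edge e.
Hypothesis HM : perfect_matching W E M.

Definition pm v := odflt v [pick u | [set v; u] \in M].

Lemma pmME e : e \in M -> e \in E.
Proof. by case/andP: HM => /andP[/subsetP H _] _; apply: H. Qed.

Lemma pmW e : e \in M -> e \subset W.
Proof. by case/andP: HM => /andP[_ /forall_inP H] _; apply: H. Qed.

Lemma pm_card v : v \in W -> #|[set e in M | v \in e]| == 1.
Proof. by case/andP: HM => _ /forall_inP H; apply: H. Qed.

Lemma pm_edge v : v \in W -> [set v; pm v] \in M.
Proof.
move=> vW; rewrite /pm; case: pickP => [u //|H].
case/cards1P: (pm_card vW) => e He.
have : e \in [set e in M | v \in e] by rewrite He set11.
rewrite inE => /andP[eM ve].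
have [a [b [Eab _]]] := lat_edge_col (HE (pmME eM)).
move: ve; rewrite Eab => /set2P[] Hv; rewrite -Hv in Eab.
  by move: (H b); rewrite -Eab eM.
by move: (H a); rewrite setUC -Eab eM.
Qed.

Lemma pm_uniq e v : e \in M -> v \in e -> e = [set v; pm v].
Proof.
move=> eM ve.
have vW : v \in W by apply: (subsetP (pmW eM)).
case/cards1P: (pm_card vW) => f Hf.
have h1 : e \in [set e in M | v \in e] by rewrite inE eM.
have h2 : [set v; pm v] \in [set e in M | v \in e] by rewrite inE pm_edge // set21.
by move: h1 h2; rewrite Hf !inE => /eqP -> /eqP ->.
Qed.

Lemma pm_out v : v \notin W -> pm v = v.
Proof.
move=> vW; rewrite /pm; case: pickP => [u Hu|//].
by move: vW; rewrite (subsetP (pmW Hu)) // set21.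
Qed.

Lemma pm_in v : v \in W -> pm v \in W.
Proof. by move=> vW; apply: (subsetP (pmW (pm_edge vW))); rewrite set22. Qed.

Lemma pm_col v : v \in W -> black (pm v) = ~~ black v.
Proof.
move=> vW; have [a [b [Eab Hab]]] := lat_edge_col (HE (pmME (pm_edge vW))).
exact: set2_col Eab Hab.
Qed.

Lemma pm_inv v : pm (pm v) = v.
Proof.
case: (boolP (v \in W)) => vW; last by rewrite !pm_out.
have e1 := pm_edge vW.
have := pm_uniq e1 (set22 v (pm v)).
have c1 := pm_col (pm_in vW).
move=> Ee; have : pm (pm v) \in [set v; pm v] by rewrite Ee set22.
case/set2P=> // H; move: c1; rewrite H; by case: (black (pm v)).
Qed.

End PM.

Section Main.
Variable N : nat.
Implicit Types (u v w a b x y z : vtx N) (e : {set vtx N}).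
Variables (W : {set vtx N}) (E M M' : {set {set vtx N}}).
Hypothesis HE : forall e, e \in E -> lat_edge e.
Hypothesis HM : perfect_matching W E M.
Hypothesis HM' : perfect_matching W E M'.

Notation m := (pm M).
Notation m' := (pm M').
Let colM := pm_col HE HM.
Let colM' := pm_col HE HM'.
Let invM := pm_inv HE HM.
Let invM' := pm_inv HE HM'.
Let outM := pm_out HM.
Let outM' := pm_out HM'.

Definition hh v := if black v then m v else m' v.
Definition kk v := if black v then m' v else m v.

Lemma hK : cancel hh kk.
Proof.
move=> v; case: (boolP (v \in W)) => vW; case: (boolP (black v)) => bv.
- by rewrite /hh bv /kk colM // bv /= invM.
- by rewrite /hh (negbTE bv) /kk colM' // (negbTE bv) /= invM'.
- by rewrite /hh bv /kk outM // bv outM'.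
- by rewrite /hh (negbTE bv) /kk outM' // (negbTE bv) outM.
Qed.

Lemma kK : cancel kk hh.
Proof.
move=> v; case: (boolP (v \in W)) => vW; case: (boolP (black v)) => bv.
- by rewrite /kk bv /hh colM' // bv /= invM'.
- by rewrite /kk (negbTE bv) /hh colM // (negbTE bv) /= invM.
- by rewrite /kk bv /hh outM' // bv outM.
- by rewrite /kk (negbTE bv) /hh outM // (negbTE bv) outM'.
Qed.

Lemma h_inj : injective hh. Proof. exact: can_inj hK. Qed.

Lemma hW v : v \in W -> hh v \in W.
Proof. by move=> vW; rewrite /hh; case: ifP => _; [apply: (pm_in HE HM)|apply: (pm_in HE HM')]. Qed.

Lemma h_edge v : v \in W -> [set v; hh v] \in E.
Proof.
move=> vW; rewrite /hh; case: ifP => _.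
  by apply: (pmME HM); apply: (pm_edge HE HM).
by apply: (pmME HM'); apply: (pm_edge HE HM').
Qed.

Lemma h_col v : v \in W -> black (hh v) = ~~ black v.
Proof. by move=> vW; rewrite /hh; case: (boolP (black v)) => bv; rewrite ?colM ?colM' // bv. Qed.

Lemma exists_v0 : M' != M -> exists v0, [/\ v0 \in W, black v0 & m v0 != m' v0].
Proof.
move=> Hne.
have [e eM eM'] : exists2 e, e \in M & e \notin M'.
  apply/exists_inP; apply: contraR Hne => /exists_inP H.
  have sub : M \subset M' by apply/subsetP => e eM; apply/negPn/negP => eM'; apply: H; exists e.
  rewrite eqEsubset sub andbT; apply/subsetP => e eM'.
  have [a [b [Eab _]]] := lat_edge_col (HE (pmME HM' eM')).
  have ae : a \in e by rewrite Eab set21.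
  have aW : a \in W by apply: (subsetP (pmW HM' eM')).
  have e1 := pm_edge HE HM aW.
  have e2 := pm_uniq HE HM' (subsetP sub _ e1) (set21 _ _).
  by rewrite (pm_uniq HE HM' eM' ae) -e2.
have [a [b [Eab Hab]]] := lat_edge_col (HE (pmME HM eM)).
pose v0 := if black a then a else b.
have v0e : v0 \in e by rewrite /v0 Eab; case: ifP => _; rewrite ?set21 ?set22.
have bv0 : black v0 by rewrite /v0; case: (boolP (black a)) => ba //; move: Hab; rewrite (negbTE ba); case: (black b).
have v0W : v0 \in W by apply: (subsetP (pmW HM eM)).
exists v0; split=> //; apply: contra eM' => /eqP H.
by rewrite (pm_uniq HE HM eM v0e) H; apply: (pm_edge HE HM').
Qed.

Variable v0 : vtx N.
Hypotheses (v0W : v0 \in W) (bv0 : black v0) (mv0 : m v0 != m' v0).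

Let c := orbit hh v0.

Lemma iterW n : iter n hh v0 \in W.
Proof. by elim: n => //= n IH; apply: hW. Qed.

Lemma orbW z : z \in c -> z \in W.
Proof. by rewrite -fconnect_orbit => /iter_findex <-; apply: iterW. Qed.

Lemma orb_h z : z \in c -> hh z \in c.
Proof. exact: mem_orbit. Qed.

Lemma orb_k z : z \in c -> kk z \in c.
Proof.
rewrite -!fconnect_orbit => H; apply: connect_trans H _.
rewrite fconnect_sym; last exact: h_inj.
by have := fconnect1 hh (kk z); rewrite kK.
Qed.

Lemma orb_m z : z \in c -> m z \in c.
Proof.
move=> zc; case: (boolP (black z)) => bz.
  by have := orb_h zc; rewrite /hh bz.
by have := orb_k zc; rewrite /kk (negbTE bz).
Qed.

Lemma orb_neq z : z \in c -> black z -> m z != m' z.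
Proof.
move=> zc bz; apply/negP => /eqP Hmz.
have zW := orbW zc.
have h2 : hh (hh z) = z.
  by rewrite {2}/hh bz /hh colM // bz /= Hmz invM'.
have it : forall n, iter n hh z \in [set z; hh z].
  elim=> [|n IH] /=; first by rewrite set21.
  by case/set2P: IH => ->; rewrite ?h2 ?set21 ?set22.
have : fconnect hh z v0.
  rewrite fconnect_sym; last exact: h_inj.
  by rewrite fconnect_orbit.
move/iter_findex => Hv; have := it (findex hh z v0); rewrite Hv.
case/set2P=> Hv0.
  by move: mv0; rewrite Hv0 Hmz eqxx.
by move: bv0; rewrite Hv0 h_col // bz.
Qed.

Lemma c_size : 2 < size c.
Proof.
have vc : v0 \in c by apply: in_orbit.
have c1 := orb_h vc; have c2 := orb_h c1.
have hv0 : hh v0 = m v0 by rewrite /hh bv0.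
have b1 : black (hh v0) = false by rewrite h_col // bv0.
have b2 : black (hh (hh v0)) = true by rewrite h_col ?hW // b1.
have h2 : hh (hh v0) = m' (m v0) by rewrite -hv0 /hh b1.
have n02 : v0 != hh (hh v0).
  apply/eqP => H; move: mv0; rewrite h2 in H.
  by rewrite {2}H invM' eqxx.
have U : uniq [:: v0; hh v0; hh (hh v0)].
  rewrite /= !inE negb_or n02 !andbT; apply/andP; split.
    by apply/negP => /eqP H; move: b1; rewrite -H bv0.
  by apply/negP => /eqP H; move: b2; rewrite -H b1.
have := uniq_leq_size U; rewrite /=; apply=> x; rewrite !inE.
by case/or3P=> /eqP ->.
Qed.

Lemma next_c x : x \in c -> next c x = hh x.
Proof.
move=> xc; have := next_cycle (cycle_orbit h_inj v0) xc.
by move=> /eqP.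
Qed.

Lemma c_graph : graph_cycle E c.
Proof.
rewrite /graph_cycle orbit_uniq c_size /=; apply/allP => x xc.
by rewrite next_c // h_edge // orbW.
Qed.

Lemma c_nice : nice_cycle W E c.
Proof.
split; first exact: c_graph.
set C := [set x in c].
exists [set e in M | e \subset W :\: C].
apply/andP; split; first (apply/andP; split).
- by apply/subsetP => e; rewrite !inE => /andP[eM ->]; rewrite (pmME HM eM).
- by apply/forall_inP => e; rewrite inE => /andP[_ ->].
apply/forall_inP => v vWC.
have vW : v \in W by move: vWC; rewrite inE => /andP[].
rewrite -(eqP (pm_card HM vW)); apply/eqP; apply: eq_card => e; rewrite !inE.
case: (boolP (e \in M)) => //= eM; case: (boolP (v \in e)) => ve; rewrite ?andbF //.
rewrite andbT (pm_uniq HE HM eM ve); apply/subsetP => y /set2P[] ->//.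
rewrite !inE (pm_in HE HM vW) andbT; apply/negP => mc.
by move: vWC; rewrite !inE -{1}(invM v) orb_m.
Qed.

Lemma cross (A B : {set vtx N}) :
  A :&: B = set0 -> (forall z, z \in W -> (z \in A) || (z \in B)) ->
  (forall y z, [set y; z] \in E -> y \in A -> z \in B -> black y) ->
  forall a0 b0, a0 \in c -> a0 \in A -> b0 \in c -> b0 \in B ->
  exists y, [/\ y \in c, black y, y \in A & m y \in B].
Proof.
move=> AB cov Hed a0 b0 a0c a0A b0c b0B.
case: (boolP [exists y, [&& y \in c, black y, y \in A & m y \in B]]) => [/existsP[y]|Hn].
  by case/and4P=> *; exists y.
have cl : forall z, z \in c -> z \in A -> hh z \in A.
  move=> z zc zA; have zW := orbW zc.
  case/orP: (cov _ (hW zW)) => // hB.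
  case: (boolP (black z)) => bz.
    case/negP: Hn; apply/existsP; exists z; rewrite zc bz zA.
    by move: hB; rewrite /hh bz.
  by move: bz; rewrite (Hed z (hh z)) // h_edge.
have it : forall n, iter n hh a0 \in A /\ iter n hh a0 \in c.
  elim=> [|n [IH1 IH2]] //=; split; [exact: cl | exact: orb_h].
have : fconnect hh a0 b0.
  apply: (@connect_trans _ _ v0).
    by rewrite fconnect_sym ?fconnect_orbit //; exact: h_inj.
  by rewrite fconnect_orbit.
move/iter_findex => Hb; have [Ha _] := it (findex hh a0 b0); rewrite Hb in Ha.
have : b0 \in A :&: B by rewrite inE Ha b0B.
by rewrite AB inE.
Qed.

Lemma final (Ds : seq {set {set vtx N}}) :
  (forall D, D \in Ds -> ecut W E D) ->
  (forall c', nice_cycle W E c' ->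
     exists2 D, D \in Ds & exists2 x, x \in c' & [set x; next c' x] \in D) ->
  (\bigcup_(D <- Ds) D) :&: M \subset M' -> False.
Proof.
move=> Hcut Hnice Hsub.
have [D DDs [x xc xD]] := Hnice _ c_nice.
rewrite next_c // in xD.
have [V1 [V2 [[V12 V12W _ _] [HD [_ Hcol]]]]] := Hcut D DDs.
have xW := orbW xc.
have : [set x; hh x] \in cut_edges E V1 V2 by rewrite -HD.
rewrite inE => /andP[_ /existsP[u /andP[uV1 /existsP[w /andP[wV2 /eqP Euw]]]]].
have uc : u \in c.
  have : u \in [set x; hh x] by rewrite Euw set21.
  by case/set2P => ->; [| apply: orb_h].
have wc : w \in c.
  have : w \in [set x; hh x] by rewrite Euw set22.
  by case/set2P => ->; [| apply: orb_h].
have cov : forall z, z \in W -> (z \in V1) || (z \in V2) by move=> z; rewrite -V12W inE.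
have inD : forall y z, [set y; z] \in E -> y \in V1 -> z \in V2 -> [set y; z] \in D.
  move=> y z yzE yA zB; rewrite HD inE yzE; apply/existsP; exists y; rewrite yA.
  by apply/existsP; exists z; rewrite zB eqxx.
have [y [yc b_y Hy]] : exists y, [/\ y \in c, black y & [set y; m y] \in D].
  case: Hcol => Hc.
  - have [|y [yc b_y yA myB]] := cross V12 cov _ uc uV1 wc wV2.
      move=> y z yzE yA zB; rewrite -(Hc [set y; z]) ?set21 //.
      exact: inD.
    exists y; split => //; apply: inD => //.
    by apply: (pmME HM); apply: (pm_edge HE HM); apply: orbW.
  - have V21 : V2 :&: V1 = set0 by rewrite setIC.
    have cov' : forall z, z \in W -> (z \in V2) || (z \in V1).
      by move=> z /cov; rewrite orbC.
    have [|y [yc b_y yA myB]] := cross V21 cov' _ wc wV2 uc uV1.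
      move=> y z yzE yA zB; rewrite -(Hc [set y; z]) ?set21 //.
      by rewrite setUC; apply: inD => //; rewrite setUC.
    exists y; split => //; rewrite setUC; apply: inD => //.
    by rewrite setUC; apply: (pmME HM); apply: (pm_edge HE HM); apply: orbW.
have yW := orbW yc.
have yM := pm_edge HE HM yW.
have yM' : [set y; m y] \in M'.
  apply: (subsetP Hsub); rewrite inE yM andbT bigcup_seq.
  by apply/bigcupP; exists D.
have := pm_uniq HE HM' yM' (set21 _ _).
move=> Heq; have : m y \in [set y; m' y] by rewrite -Heq set22.
case/set2P => H.
  by move: (colM yW); rewrite H; case: (black y).
by move: (orb_neq yc b_y); rewrite H eqxx.
Qed.

End Main.

Theorem mainTheorem3 (N : nat) (c : seq (vtx N)) (Ds : seq {set {set vtx N}}) :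
  lat_cycle c ->
  (exists M, perfect_matching (HS_V c) (HS_E c) M) ->
  (forall D, D \in Ds -> ecut (HS_V c) (HS_E c) D) ->
  (forall c', nice_cycle (HS_V c) (HS_E c) c' ->
     exists2 D, D \in Ds & exists2 x, x \in c' & [set x; next c' x] \in D) ->
  complete_forcing (HS_V c) (HS_E c) (\bigcup_(D <- Ds) D).
Proof.
move=> _ _ Hcut Hnice M M' HM HM' Hsub.
have HE : forall e, e \in HS_E c -> lat_edge e.
  by move=> e; rewrite inE => /existsP[h /andP[_ /andP[]]].
case: (eqVneq M' M) => // Hne.
have [v0 [v0W bv0 mv0]] := exists_v0 HE HM HM' Hne.
by case: (final HE HM HM' v0W bv0 mv0 Hcut Hnice Hsub).
Qed.
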